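(* Let $d\ge1$ and let $D$ be a Newton diagram in $2$ variables whose support is exactly $\{(a,b)\in\mathbb N_0^2: a+b<d\}$. Then there exists a Newton diagram $\tilde D$ with the same support such that $\tilde D(a,b)=D(a,b)$ for all $(a,b)$ with $a+b=d-1$, and $SC(\tilde D)=\frac{d+1}{2}$.
   Context: For $m\in\mathbb Z^n$ write $|m|=m_1+\dots+m_n$; $e_1,\dots,e_n$ is the standard basis. A Newton diagram in $n$ variables is a function $D\colon\mathbb Z^n\to\{0,P,N\}$ ($P,N$ formal symbols) whose support $K=D^{-1}(\{P,N\})$ is a finite nonempty subset of $\mathbb N_0^n$. For $a\in\mathbb Z^n$ let $E(a)=\{a,a-e_1,\dots,a-e_n\}$; $E(a)$ is a node of $D$ if the image $D(E(a))$ equals $\{P\}$, $\{N\}$, $\{0,P\}$ or $\{0,N\}$. For $n=2$: a node $E(a)$ is an interior node if no point of $E(a)$ has $D$-value $0$, an edge node if exactly one does, a vertex node if exactly two do; a vertex node is a bottom node if its two $0$-points are $a-e_1$ and $a-e_2$. The weighted surface count is $SC(D)=(\#\text{interior nodes})+\tfrac12\big((\#\text{edge nodes})+(\#\text{vertex nodes})-(\#\text{bottom nodes})\big)$. *)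

(* Defs.v *)
From Stdlib Require Import ZArith QArith List Bool.
Import ListNotations.
Open Scope Z_scope.

Inductive dval := V0 | VP | VN.

Definition dval_eqb (x y : dval) : bool :=
  match x, y with
  | V0, V0 | VP, VP | VN, VN => true
  | _, _ => false
  end.

Definition diagram2 := Z -> Z -> dval.

Definition has_triangle_support (d : nat) (D : diagram2) : Prop :=
  forall a b : Z, D a b <> V0 <-> (0 <= a /\ 0 <= b /\ a + b < Z.of_nat d).

(* Image D(E(a)) for a = (a1,a2): values at a, a-e1, a-e2. *)
Definition img (D : diagram2) (a1 a2 : Z) : list dval :=
  [D a1 a2; D (a1 - 1) a2; D a1 (a2 - 1)].

Definition memb (v : dval) (l : list dval) : bool := existsb (dval_eqb v) l.

Definition set_eqb (l s : list dval) : bool :=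
  forallb (fun v => memb v s) l && forallb (fun v => memb v l) s.

Definition is_node (D : diagram2) (a1 a2 : Z) : bool :=
  let I := img D a1 a2 in
  set_eqb I [VP] || set_eqb I [VN] || set_eqb I [V0; VP] || set_eqb I [V0; VN].

Definition is0 (v : dval) : bool := dval_eqb v V0.

(* number of points of E(a) with D-value 0 (the three points are distinct) *)
Definition nzeros (D : diagram2) (a1 a2 : Z) : nat :=
  List.length (filter is0 (img D a1 a2)).

Definition interior_node D a1 a2 := is_node D a1 a2 && Nat.eqb (nzeros D a1 a2) 0.
Definition edge_node D a1 a2 := is_node D a1 a2 && Nat.eqb (nzeros D a1 a2) 1.
Definition vertex_node D a1 a2 := is_node D a1 a2 && Nat.eqb (nzeros D a1 a2) 2.
Definition bottom_node D a1 a2 :=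
  vertex_node D a1 a2 && is0 (D (a1 - 1) a2) && is0 (D a1 (a2 - 1)).

(* The box [0,M]^2 of lattice points. If the support of D lies in
   [0,M-1]^2, every node E(a) has a in this box (a node contains a point
   of the support, which is a, a+e1 or a+e2 away from a).  *)
Definition box (M : nat) : list (Z * Z) :=
  list_prod (map Z.of_nat (seq 0 (S M))) (map Z.of_nat (seq 0 (S M))).

Definition count_box (M : nat) (f : Z -> Z -> bool) : Z :=
  Z.of_nat (List.length (filter (fun p => f (fst p) (snd p)) (box M))).

Definition SC (M : nat) (D : diagram2) : Q :=
  inject_Z (count_box M (interior_node D))
  + (1 # 2) * inject_Z (count_box M (edge_node D) + count_box M (vertex_node D)
                         - count_box M (bottom_node D)).

(* Main.v *)
Require Import Defs.
From Stdlib Require Import ZArith QArith Lia List Bool Qfield.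
Import ListNotations.
Open Scope Z_scope.

Definition negv (x : dval) := match x with VP => VN | VN => VP | V0 => V0 end.
Definition flb (b : bool) (x : dval) := if b then x else negv x.

Definition Dt (d : nat) (D : diagram2) : diagram2 := fun i j =>
  if (0 <=? i) && (0 <=? j) && (i + j <? Z.of_nat d)
  then flb (Z.even (Z.of_nat d - 1 - i - j)) (D i (Z.of_nat d - 1 - i)) else V0.

Definition node3 u v w := let I := [u;v;w] in
  set_eqb I [VP] || set_eqb I [VN] || set_eqb I [V0; VP] || set_eqb I [V0; VN].
Definition nz3 u v w := List.length (filter is0 [u;v;w]).
Definition b2z (b:bool) : Z := if b then 1 else 0.
Definition Wf u v w : Z :=
  2 * b2z (node3 u v w && Nat.eqb (nz3 u v w) 0) + b2z (node3 u v w && Nat.eqb (nz3 u v w) 1)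
  + b2z (node3 u v w && Nat.eqb (nz3 u v w) 2)
  - b2z (node3 u v w && Nat.eqb (nz3 u v w) 2 && is0 v && is0 w).

Definition w2 (D : diagram2) (i j : Z) : Z :=
  2 * b2z (interior_node D i j) + b2z (edge_node D i j) + b2z (vertex_node D i j)
  - b2z (bottom_node D i j).

Lemma w2_eq D i j : w2 D i j = Wf (D i j) (D (i-1) j) (D i (j-1)).
Proof. reflexivity. Qed.

Fixpoint sumL {A} (g : A -> Z) (l : list A) : Z :=
  match l with [] => 0 | x :: l => g x + sumL g l end.

Lemma count_sum {A} (f : A -> bool) l :
  Z.of_nat (length (filter f l)) = sumL (fun p => b2z (f p)) l.
Proof.
  induction l as [|x l IH]; cbn [sumL filter]; [reflexivity|].
  destruct (f x); simpl length; rewrite ?Nat2Z.inj_succ; rewrite IH; unfold b2z; lia.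
Qed.

Lemma sumL_app {A} g (l1 l2 : list A) : sumL g (l1 ++ l2) = sumL g l1 + sumL g l2.
Proof. induction l1; cbn [sumL list_prod app map]; try rewrite IHl1; lia. Qed.

Lemma sumL_map {A B} (g : B -> Z) (f : A -> B) l :
  sumL g (map f l) = sumL (fun x => g (f x)) l.
Proof. induction l; cbn [sumL list_prod app map]; try rewrite IHl; lia. Qed.

Lemma sumL_prod {A B} (g : A * B -> Z) X Y :
  sumL g (list_prod X Y) = sumL (fun x => sumL (fun y => g (x,y)) Y) X.
Proof. induction X; cbn [sumL list_prod app map]; try rewrite sumL_app, sumL_map, IHX; lia. Qed.

Lemma sumL_lin {A} (a b c e : A -> Z) l :
  sumL (fun p => 2 * a p + b p + c p - e p) l
  = 2 * sumL a l + sumL b l + sumL c l - sumL e l.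
Proof. induction l; cbn [sumL list_prod app map]; try rewrite IHl; lia. Qed.

Lemma sumL_plus {A} (f g : A -> Z) l :
  sumL (fun p => f p + g p) l = sumL f l + sumL g l.
Proof. induction l; cbn [sumL list_prod app map]; try rewrite IHl; lia. Qed.

Lemma sumL_ext {A} (f g : A -> Z) l :
  (forall x, In x l -> f x = g x) -> sumL f l = sumL g l.
Proof.
  induction l; cbn [sumL In]; intros H; [reflexivity|].
  rewrite H by auto. rewrite IHl by auto. reflexivity.
Qed.

Lemma sumL_one {A} (l : list A) : sumL (fun _ => 1) l = Z.of_nat (length l).
Proof. induction l; cbn [sumL length]; rewrite ?Nat2Z.inj_succ; try rewrite IHl; lia. Qed.

Lemma sum_single n k v :
  sumL (fun j => if j =? k then v else 0) (map Z.of_nat (seq 0 n))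
  = if (0 <=? k) && (k <? Z.of_nat n) then v else 0.
Proof.
  induction n as [|n IH].
  - simpl. destruct (Z.leb_spec 0 k), (Z.ltb_spec k 0); simpl; try reflexivity; lia.
  - rewrite seq_S, map_app, sumL_app, IH.
    rewrite Nat2Z.inj_succ. cbn [sumL map app]. rewrite Nat.add_0_l.
    destruct (Z.eqb_spec (Z.of_nat n) k); destruct (Z.leb_spec 0 k);
    destruct (Z.ltb_spec k (Z.of_nat n)); destruct (Z.ltb_spec k (Z.succ (Z.of_nat n)));
    simpl; lia.
Qed.

Lemma in_X d j : In j (map Z.of_nat (seq 0 (S d))) -> 0 <= j <= Z.of_nat d.
Proof.
  intros H. apply in_map_iff in H. destruct H as [x [<- Hx]].
  apply in_seq in Hx. lia.
Qed.

Lemma W1 s x b : s <> V0 -> Wf (flb b s) x (flb (negb b) s) = 0.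
Proof. intros; destruct s, x, b; try reflexivity; congruence. Qed.
Lemma W2 x : Wf x V0 V0 = 0.
Proof. destruct x; reflexivity. Qed.
Lemma W4 x : x <> V0 -> Wf V0 V0 x = 1.
Proof. intros; destruct x; try reflexivity; congruence. Qed.
Lemma W5 x : x <> V0 -> Wf V0 x V0 = 1.
Proof. intros; destruct x; try reflexivity; congruence. Qed.
Lemma W6 b s t : s <> V0 -> t <> V0 -> Wf (flb b s) (flb (negb b) t) V0 + Wf V0 t s = 1.
Proof. intros; destruct b, s, t; try reflexivity; congruence. Qed.
Lemma flb_nz b x : x <> V0 -> flb b x <> V0.
Proof. destruct b, x; simpl; congruence. Qed.

Lemma even_p1 x : Z.even (x + 1) = negb (Z.even x).
Proof. rewrite Z.add_1_r, Z.even_succ, <- Z.negb_even. reflexivity. Qed.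

Section Main.
Variable d : nat.
Variable D : diagram2.
Hypothesis hd : (1 <= d)%nat.
Hypothesis hD : has_triangle_support d D.
Let n := Z.of_nat d.

Lemma Dt_in i j : 0 <= i -> 0 <= j -> i + j < n ->
  Dt d D i j = flb (Z.even (n - 1 - i - j)) (D i (n - 1 - i)).
Proof.
  intros. unfold Dt. fold n.
  destruct (Z.leb_spec 0 i), (Z.leb_spec 0 j), (Z.ltb_spec (i+j) n); simpl; try lia.
  reflexivity.
Qed.

Lemma Dt_out i j : ~ (0 <= i /\ 0 <= j /\ i + j < n) -> Dt d D i j = V0.
Proof.
  intros. unfold Dt. fold n.
  destruct (Z.leb_spec 0 i), (Z.leb_spec 0 j), (Z.ltb_spec (i+j) n); simpl; try reflexivity.
  exfalso; lia.
Qed.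

Lemma s_nz i : 0 <= i < n -> D i (n - 1 - i) <> V0.
Proof. intros. apply hD. unfold n in *. lia. Qed.

Definition kk i := if i =? n then -1 else n - i.

Lemma point i j : 0 <= i <= n -> 0 <= j <= n ->
  w2 (Dt d D) i j = (if j =? 0 then w2 (Dt d D) i 0 else 0)
                  + (if j =? kk i then w2 (Dt d D) i (kk i) else 0).
Proof.
  intros Hi Hj.
  destruct (Z.eqb_spec j 0).
  { subst. destruct (Z.eqb_spec 0 (kk i)).
    - exfalso. unfold kk in *. destruct (Z.eqb_spec i n); lia.
    - lia. }
  destruct (Z.eqb_spec j (kk i)). { subst. lia. }
  assert (Hn : 1 <= n) by (unfold n; lia).
  rewrite w2_eq.
  destruct (Z_lt_ge_dec (i + j) n).
  - rewrite (Dt_in i j), (Dt_in i (j-1)) by lia.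
    replace (n - 1 - i - (j - 1)) with ((n - 1 - i - j) + 1) by lia.
    rewrite even_p1. rewrite W1. lia. apply s_nz; lia.
  - assert (i + j > n).
    { unfold kk in *. destruct (Z.eqb_spec i n); lia. }
    rewrite !Dt_out by lia. rewrite W2. lia.
Qed.

Lemma column i : 0 <= i <= n ->
  w2 (Dt d D) i 0 + (if (0 <=? kk i) && (kk i <? Z.of_nat (S d)) then w2 (Dt d D) i (kk i) else 0) = 1.
Proof.
  intros Hi. rewrite Nat2Z.inj_succ. fold n.
  assert (Hn : 1 <= n) by (unfold n; lia).
  unfold kk. destruct (Z.eqb_spec i n).
  - subst. simpl. rewrite w2_eq.
    rewrite (Dt_out n 0), (Dt_out n (0-1)) by lia.
    rewrite (Dt_in (n-1) 0) by lia. rewrite W5. lia.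
    apply flb_nz, s_nz; lia.
  - destruct (Z.leb_spec 0 (n - i)); [|lia].
    destruct (Z.ltb_spec (n - i) (Z.succ n)); [|lia]. simpl.
    rewrite !w2_eq.
    destruct (Z.eqb_spec i 0).
    + subst. rewrite (Dt_out (0-1) 0), (Dt_out 0 (0-1)), (Dt_out 0 (n-0)),
        (Dt_out (0-1) (n-0)) by lia.
      rewrite (Dt_in 0 (n-0-1)) by lia. rewrite W2, W4. lia.
      apply flb_nz, s_nz; lia.
    + rewrite (Dt_out i (0-1)), (Dt_out i (n-i)) by lia.
      rewrite (Dt_in i 0), (Dt_in (i-1) 0), (Dt_in (i-1) (n-i)), (Dt_in i (n-i-1)) by lia.
      replace (n - 1 - (i - 1) - 0) with ((n - 1 - i - 0) + 1) by lia.
      replace (n - 1 - (i - 1) - (n - i)) with 0 by lia.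
      replace (n - 1 - i - (n - i - 1)) with 0 by lia.
      rewrite even_p1. simpl (Z.even 0). unfold flb at 3 4.
      apply W6; apply s_nz; lia.
Qed.

Lemma total :
  2 * count_box d (interior_node (Dt d D)) + (count_box d (edge_node (Dt d D))
   + count_box d (vertex_node (Dt d D)) - count_box d (bottom_node (Dt d D))) = n + 1.
Proof.
  unfold count_box. rewrite !count_sum.
  replace (2 * _ + _) with
    (sumL (fun p => w2 (Dt d D) (fst p) (snd p)) (box d)).
  2:{ unfold w2. rewrite sumL_lin. lia. }
  unfold box. rewrite sumL_prod. simpl (fst _). simpl (snd _).
  rewrite (sumL_ext _ (fun _ => 1)).
  - rewrite sumL_one, length_map, length_seq. unfold n. lia.
  - intros i Hi. apply in_X in Hi. fold n in Hi.
    rewrite (sumL_ext _ (fun j => (if j =? 0 then w2 (Dt d D) i 0 else 0)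
                  + (if j =? kk i then w2 (Dt d D) i (kk i) else 0))).
    + rewrite sumL_plus, !sum_single. rewrite <- (column i Hi).
      simpl. reflexivity.
    + intros j Hj. apply in_X in Hj. apply point; fold n in Hj; lia.
Qed.

End Main.

Theorem mainTheorem9 (d : nat) (hd : (1 <= d)%nat) (D : diagram2)
  (hD : has_triangle_support d D) :
  exists Dt : diagram2,
    has_triangle_support d Dt /\
    (forall a b : Z, (0 <= a)%Z -> (0 <= b)%Z -> (a + b = Z.of_nat d - 1)%Z ->
       Dt a b = D a b) /\
    (SC d Dt == inject_Z (Z.of_nat d + 1) / inject_Z 2)%Q.
Proof.
  exists (Dt d D). split; [|split].
  - intros a b. split.
    + intros H. destruct (Z.le_gt_cases 0 a), (Z.le_gt_cases 0 b),
        (Z.lt_ge_cases (a+b) (Z.of_nat d)); auto;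
      exfalso; apply H; apply Dt_out; lia.
    + intros H. rewrite Dt_in by lia. apply flb_nz, s_nz; auto; lia.
  - intros a b Ha Hb Hab. rewrite Dt_in by lia.
    replace (Z.of_nat d - 1 - a - b) with 0 by lia.
    replace (Z.of_nat d - 1 - a) with b by lia. reflexivity.
  - pose proof (total d D hd hD) as T. unfold SC.
    set (I := count_box d (interior_node (Dt d D))) in *.
    set (X := count_box d (edge_node (Dt d D)) + count_box d (vertex_node (Dt d D))
                - count_box d (bottom_node (Dt d D))) in *.
    replace X with (Z.of_nat d + 1 + (-2) * I) by lia.
    rewrite inject_Z_plus, inject_Z_mult.
    unfold Qdiv. setoid_replace (inject_Z 2) with (2 # 1) by reflexivity.
    field.
Qed.
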